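(* If $\dfrac{\mathfrak{g}}{\sim}\subseteq\downarrow\mathfrak{Z}$, then ${\rm Eigen}(\sigma_{\varphi\restriction_{\frac{\mathfrak{g}}{\sim}},\mathfrak{w}^{\frac{\mathfrak{g}}{\sim}}},V^{\frac{\mathfrak{g}}{\sim}})\setminus\{0\}=\varnothing$.
   Context: $V$ is a vector space over a field $F$, $\Gamma$ a nonempty set, $\varphi:\Gamma\to\Gamma$ a self-map, and $\mathfrak{w}=(\mathfrak{w}_\alpha)_{\alpha\in\Gamma}\in F^\Gamma$. The weighted generalized shift is $\sigma_{\varphi,\mathfrak{w}}:V^\Gamma\to V^\Gamma$, $(x_\alpha)_{\alpha\in\Gamma}\mapsto(\mathfrak{w}_\alpha x_{\varphi(\alpha)})_{\alpha\in\Gamma}$. For nonempty $D\subseteq\Gamma$, $\mathfrak{w}^D:=(\mathfrak{w}_\alpha)_{\alpha\in D}$. $\mathfrak{Z}:=\{\alpha\in\Gamma:\mathfrak{w}_\alpha=0\}$ and $\downarrow\mathfrak{Z}:=\bigcup_{n\geq0}\varphi^{-n}(\mathfrak{Z})$. The relation $\sim$ on $\Gamma$ is defined by $\alpha\sim\beta$ iff there exist $n,m\geq1$ with $\varphi^n(\alpha)=\varphi^m(\beta)$; it is an equivalence relation, $\frac{\alpha}{\sim}$ denotes the equivalence class of $\alpha$ (which is mapped into itself by $\varphi$), and $\mathfrak{g}\in\Gamma$. For a linear map $T:W\to W$, ${\rm Eigen}(T,W)$ is the set of all $r\in F$ such that $T(x)=rx$ for some nonzero $x\in W$. *)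

(* Defs.v *)
From mathcomp Require Import all_boot all_algebra.
Set Implicit Arguments. Unset Strict Implicit. Unset Printing Implicit Defensive.
Import GRing.Theory.
Local Open Scope ring_scope.

Section WGS.
Variables (F : fieldType) (V : lmodType F).

Definition wshift (G : Type) (phi : G -> G) (w : G -> F) (x : G -> V) : G -> V :=
  fun a => w a *: x (phi a).

Definition Eigen (G : Type) (T : (G -> V) -> (G -> V)) (r : F) : Prop :=
  exists x : G -> V, x <> (fun _ => 0) /\ T x = (fun a => r *: x a).
End WGS.

Definition sim (G : Type) (phi : G -> G) (a b : G) : Prop :=
  exists n m : nat, (1 <= n)%N /\ (1 <= m)%N /\ iter n phi a = iter m phi b.

Definition cls (G : Type) (phi : G -> G) (g : G) := {a : G | sim phi g a}.

Lemma sim_phi (G : Type) (phi : G -> G) (g a : G) :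
  sim phi g a -> sim phi g (phi a).
Proof.
move=> [n [m [hn [hm e]]]]; exists n.+1, m; split => //; split => //.
by rewrite -iterSr iterS e -iterS.
Qed.

Definition phi_res (G : Type) (phi : G -> G) (g : G) (a : cls phi g) : cls phi g :=
  exist _ (phi (proj1_sig a)) (sim_phi (proj2_sig a)).

Definition w_res (F : Type) (G : Type) (phi : G -> G) (g : G) (w : G -> F)
  (a : cls phi g) : F := w (proj1_sig a).

Definition downZ (F : fieldType) (G : Type) (phi : G -> G) (w : G -> F) (a : G) : Prop :=
  exists n : nat, w (iter n phi a) = 0.

(* Main.v *)
Require Import Defs.
From mathcomp Require Import all_boot all_algebra.
From Stdlib Require Import FunctionalExtensionality.
Local Open Scope ring_scope.
Import GRing.Theory.

Theorem corollary2p3 (F : fieldType) (V : lmodType F) (G : Type)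
  (phi : G -> G) (w : G -> F) (g : G) :
  (forall a : G, sim phi g a -> downZ phi w a) ->
  forall r : F,
    Eigen (wshift (V := V) (@phi_res G phi g) (w_res (phi := phi) (g := g) w)) r ->
    r = 0.
Proof.
move=> hZ r [x [hx hT]].
case: (eqVneq r 0) => // rn0; exfalso; apply: hx.
have key : forall a : cls phi g, w (proj1_sig a) = 0 -> x a = 0.
  move=> a wa.
  have := congr1 (fun f => f a) hT; rewrite /wshift /w_res /= wa scale0r.
  move/esym/eqP; rewrite scaler_eq0 (negbTE rn0) /=; by move/eqP.
have P : forall n (a : cls phi g), w (iter n phi (proj1_sig a)) = 0 -> x a = 0.
  elim=> [|n IH] a /=; first exact: key.
  rewrite -iterS iterSr => /(IH (phi_res a)) => h0.
  have := congr1 (fun f => f a) hT; rewrite /wshift /w_res /= h0 scaler0.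
  move/esym/eqP; rewrite scaler_eq0 (negbTE rn0) /=; by move/eqP.
apply: functional_extensionality => a.
have [n hn] := hZ _ (proj2_sig a).
exact: P hn.
Qed.
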